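(* Let $G\in L_2(U,\mu)$, $w=\sum_\alpha w_\alpha\mathfrak{N}_\alpha$ with $w_\alpha\in\mathbb{R}$, and $f=\sum_\alpha f_\alpha(t,\upsilon)\mathfrak{N}_\alpha$ with $f_\alpha\in L_2(U,\mu)$ for each $\alpha$. Then the equation $$u(t)=w+\int_0^t\int_V[u(s)G(s,\upsilon)+f(s,\upsilon)]\diamond\mathfrak{N}(ds,d\upsilon),\quad 0\le t\le T,$$ has a unique solution $u(t)=\sum_\alpha u_\alpha(t)\mathfrak{N}_\alpha$ in the class of generalized processes whose coefficients $u_\alpha$ are continuous on $[0,T]$. Its coefficients are $u_0(t)=w_0$ and, for $|\alpha|\ge1$, $$u_\alpha(t)=w_\alpha+\sum_{k:\alpha_k\ge1}\int_0^t\int_V[u_{\alpha-\varepsilon_k}(r)G(r,\upsilon)+f_{\alpha-\varepsilon_k}(r,\upsilon)]m_k(r,\upsilon)\pi(d\upsilon)dr,\quad 0\le t\le T.$$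
   Context: Let $(V,\mathcal{V},\pi)$ be a $\sigma$-finite measure space, $U=[0,T]\times V$, $\mu=dt\otimes\pi$, $\{m_k\}$ a complete orthonormal system of $L_2(U,\mu)$; $\mathfrak{N}:L_2(U,\mu)\to L_2(\Omega,\mathbf{P})$ a mean-zero linear isometry, $\xi_k=\mathfrak{N}(m_k)$. $J$: finitely supported multi-indices of nonnegative integers, $\varepsilon_k$ unit multi-indices; $\{\mathfrak{N}_\alpha\}$ an orthogonal family with $\mathbf{E}\mathfrak{N}_\alpha^2=\alpha!$, $\mathfrak{N}_0=1$, obtained by degreewise orthogonalization of monomials in the $\xi_k$. Generalized random variables/processes are formal series $\sum_\alpha u_\alpha\mathfrak{N}_\alpha$ (with $u_\alpha$ numbers, resp. functions of $t$); equality means equality of all coefficients. For $h=\sum_\alpha h_\alpha(s,\upsilon)\mathfrak{N}_\alpha$ with $h_\alpha\in L_2(U,\mu)$, $\int_0^t\int_Vh\diamond\mathfrak{N}(ds,d\upsilon):=\delta(\chi_{[0,t]}h)=\sum_\alpha\sum_k\left(\int_0^t\int_Vh_\alpha m_k\,d\pi ds\right)\mathfrak{N}_{\alpha+\varepsilon_k}$; and $u(s)G(s,\upsilon):=\sum_\alpha u_\alpha(s)G(s,\upsilon)\mathfrak{N}_\alpha$. *)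

(* Defs.v *)
From HB Require Import structures.
From mathcomp Require Import all_boot all_order all_algebra.
From mathcomp Require Import all_classical all_reals all_analysis.
Set Implicit Arguments. Unset Strict Implicit. Unset Printing Implicit Defensive.
Import Order.TTheory GRing.Theory Num.Theory.
Import numFieldNormedType.Exports.
Local Open Scope classical_set_scope.
Local Open Scope ring_scope.

(** * Multi-indices: finitely supported sequences of nonnegative integers.
    A multi-index is a function [nat -> nat]; the set J of the paper is the set
    of those with finite support ([fin_supp]). *)
Definition multi_index := nat -> nat.
Definition fin_supp (a : multi_index) : Prop := finite_set [set k | a k != 0%N].
Definition mi_zero : multi_index := fun _ => 0%N.
Definition eps (k : nat) : multi_index := fun j => nat_of_bool (j == k).
Definition mi_add (a b : multi_index) : multi_index := fun j => (a j + b j)%N.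
Definition mi_sub (a b : multi_index) : multi_index := fun j => (a j - b j)%N.
Definition mi_norm (a : multi_index) : nat :=
  (\sum_(k \in [set k | a k != 0%N]) a k)%N.

Section setting.
Context {R : realType} {d : measure_display} {V : measurableType d}.

Definition mu (pi : {sigma_finite_measure set V -> \bar R}) :=
  ((@lebesgue_measure R) \x pi)%E.

Definition Uset (T : R) : set (R * V) := `[0, T] `*` setT.

Definition L2 (pi : {sigma_finite_measure set V -> \bar R}) (T : R)
    (g : R * V -> R) : Prop :=
  measurable_fun (Uset T) g /\
  (\int[mu pi]_(z in Uset T) ((g z) ^+ 2)%:E < +oo)%E.

Definition ip (pi : {sigma_finite_measure set V -> \bar R}) (T : R)
    (g h : R * V -> R) : R :=
  Rintegral (mu pi) (Uset T) (fun z => g z * h z).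

Definition complete_orthonormal (pi : {sigma_finite_measure set V -> \bar R})
    (T : R) (m : nat -> R * V -> R) : Prop :=
  [/\ (forall k, L2 pi T (m k)),
      (forall j k, ip pi T (m j) (m k) = (j == k)%:R) &
      (forall g, L2 pi T g -> (forall k, ip pi T g (m k) = 0) ->
         {ae mu pi, forall z, Uset T z -> g z = 0})].

(** * Generalized random variables / processes / fields, as formal series
    sum_a x_a N_a, represented by their coefficient families
    (equality = equality of all coefficients a in J). *)
Definition gen_rv := multi_index -> R.
Definition gen_proc := multi_index -> R -> R.
Definition gen_field := multi_index -> R * V -> R.

(** Coefficients of the diamond integral
      int_0^t int_V h <> N(ds,dv) = sum_a sum_k (int_0^t int_V h_a m_k) N_{a+eps_k}.
    The coefficient at b collects the pairs (a,k) with a + eps_k = b, i.e.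
    k with b_k >= 1 and a = b - eps_k. *)
Definition diamond_int (pi : {sigma_finite_measure set V -> \bar R})
    (m : nat -> R * V -> R) (h : gen_field) (t : R) : gen_rv :=
  fun b => \sum_(k \in [set k | (0 < b k)%N])
             Rintegral (mu pi) (`[0, t] `*` setT)
               (fun z => h (mi_sub b (eps k)) z * m k z).

Definition lin_field (u : gen_proc) (G : R * V -> R) (f : gen_field) : gen_field :=
  fun a z => u a z.1 * G z + f a z.

Definition is_solution (pi : {sigma_finite_measure set V -> \bar R}) (T : R)
    (m : nat -> R * V -> R) (w : gen_rv) (G : R * V -> R) (f : gen_field)
    (u : gen_proc) : Prop :=
  forall t, 0 <= t <= T -> forall a, fin_supp a ->
    u a t = w a + diamond_int pi m (lin_field u G f) t a.

Definition continuous_coeffs (T : R) (u : gen_proc) : Prop :=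
  forall a, fin_supp a -> {within `[0, T], continuous (u a)}.

End setting.

(* Main.v *)
Require Import Defs.
From HB Require Import structures.
From mathcomp Require Import all_boot all_order all_algebra.
From mathcomp Require Import all_classical all_reals all_analysis.
From mathcomp Require Import zify finmap lra measurable_realfun.
Import Order.TTheory GRing.Theory Num.Theory.
Import numFieldNormedType.Exports.
Local Open Scope classical_set_scope.
Local Open Scope ring_scope.

Lemma fin_supp_sub (b : multi_index) k : fin_supp b -> fin_supp (mi_sub b (eps k)).
Proof.
move=> fb; apply: sub_finite_set fb => j /=; rewrite /mi_sub.
by apply: contra_neq => ->.
Qed.

Lemma fin_supp0 : fin_supp mi_zero.
Proof.
rewrite /fin_supp /mi_zero.
have -> : [set k : nat | 0%N != 0%N] = set0 by apply/seteqP; split=> x //=.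
exact: finite_set0.
Qed.

Lemma mi_norm_sub (b : multi_index) k : fin_supp b -> (0 < b k)%N ->
  mi_norm b = (mi_norm (mi_sub b (eps k))).+1.
Proof.
move=> fb bk.
pose S := [set j | b j != 0%N].
have Sk : S k by rewrite /S /=; rewrite -lt0n.
rewrite /mi_norm.
rewrite (fsbig_widen [set j | mi_sub b (eps k) j != 0%N] S); last 2 first.
- move=> j /=; rewrite /mi_sub; apply: contra_neq => ->; by [].
- move=> j [/= Sj]; move/negP; rewrite negbK => /eqP //.
rewrite (fsbigD1 k S b) // (fsbigD1 k S (fun j => mi_sub b (eps k) j)) //.
rewrite [in RHS](eq_fsbigr (fun j => b j)); last first.
  move=> j; rewrite in_setE => -[_ /= jk]; rewrite /mi_sub /eps.
  case: (@eqP nat j k) => [//|_]; by rewrite subn0.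
rewrite /mi_sub /eps eqxx /=; move: bk; set X := (\big[_/_]_(x \in _) _); lia.
Qed.
Arguments mi_norm_sub {b k}.

Lemma bound_cont (R : realType) (T : R) (v : R -> R) : 0 <= T ->
  {within `[0, T], continuous v} -> exists M, 0 <= M /\ forall t, t \in `[0, T] -> `|v t| <= M.
Proof.
move=> T0 Hv.
have cpt := continuous_compact Hv (@segment_compact R 0 T).
have := compact_bounded cpt.
have A0 : (v @` `[0, T]) (v 0) by exists 0 => //=; rewrite in_itv /= lexx T0.
move=> /(@ex_bound _ _ _ _ _ (globally_properfilter A0)) [M HM].
exists `|M|; split => // t Ht; apply: le_trans (HM _ _) (ler_norm _).
by exists t => //; rewrite -in_setE.
Qed.

Lemma mu_measU (R : realType) (d : measure_display) (V : measurableType d) (T : R) :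
  measurable (Uset T : set (R * V)).
Proof. exact: measurableX. Qed.

Lemma L2_sq_int (R : realType) (d : measure_display) (V : measurableType d)
    (pi : {sigma_finite_measure set V -> \bar R}) (T : R) (g : R * V -> R) :
  L2 pi T g -> (mu pi).-integrable (Uset T) (fun z => (g z ^+ 2)%:E).
Proof.
move=> [mg ig]; apply/integrableP; split.
  by apply/measurable_EFinP; exact: measurable_funX.
under eq_integral do rewrite gee0_abs ?lee_fin ?sqr_ge0 //.
exact: ig.
Qed.

Lemma key_ineq (R : realType) (a b c e M : R) : 0 <= M -> `|a| <= M ->
  `|(a * b + c) * e| <= (M + 1) * (b ^+ 2 + c ^+ 2 + e ^+ 2).
Proof.
move=> M0 aM.
rewrite normrM.
have h1 : `|a * b + c| <= M * `|b| + `|c|.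
  apply: le_trans (ler_normD _ _) _; rewrite normrM lerD2r.
  by apply: ler_wpM2r.
apply: le_trans (ler_wpM2r (normr_ge0 e) h1) _.
rewrite -(real_normK (num_real b)) -(real_normK (num_real c)) -(real_normK (num_real e)).
have := normr_ge0 b; have := normr_ge0 c; have := normr_ge0 e.
set x := `|b|; set y := `|c|; set z := `|e| => z0 y0 x0.
have := mulr_ge0 M0 (sqr_ge0 (x - z)).
have := sqr_ge0 (y - z).
nra.
Qed.

Lemma integrable_term (R : realType) (d : measure_display) (V : measurableType d)
    (pi : {sigma_finite_measure set V -> \bar R}) (T : R)
    (G g mk : R * V -> R) (v : R -> R) :
  L2 pi T G -> L2 pi T g -> L2 pi T mk -> 0 <= T ->
  {within `[0, T], continuous v} ->
  (mu pi).-integrable (Uset T) (EFin \o (fun z => (v z.1 * G z + g z) * mk z)).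
Proof.
move=> LG Lg Lm T0 Hv.
have [mG _] := LG; have [mg _] := Lg; have [mmk _] := Lm.
have [M [M0 HM]] := @bound_cont _ _ _ T0 Hv.
have mU := @mu_measU R d V T.
have mv : measurable_fun (Uset T) (fun z : R * V => v z.1).
  apply: (@measurable_comp _ _ _ _ _ _ `[0, T]%classic v (Uset T) fst) => //.
  - by move=> _ [z [z1 _] <-].
  - exact: subspace_continuous_measurable_fun.
  - exact: measurable_funS measurable_fst.
have mh : measurable_fun (Uset T) (fun z => (v z.1 * G z + g z) * mk z).
  apply: measurable_funM => //; apply: measurable_funD => //.
  exact: measurable_funM.
have mU' : measurable (Uset T : set (R * V)) by exact: measurableX.
have HI : (mu pi).-integrable (Uset T) (fun z => ((M + 1) * (G z ^+ 2 +
   g z ^+ 2 + mk z ^+ 2))%:E).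
  have -> : (fun z => ((M + 1) * (G z ^+ 2 + g z ^+ 2 + mk z ^+ 2))%:E) =
     (fun z => ((M + 1)%:E * ((G z ^+ 2)%:E + (g z ^+ 2)%:E + (mk z ^+ 2)%:E))%E).
    by apply/funext => z; rewrite EFinM !EFinD.
  apply: integrableZl; first exact: measurableX.
  apply: integrableD; [exact: measurableX| |exact: L2_sq_int].
  by apply: integrableD; [exact: measurableX|exact: L2_sq_int|exact: L2_sq_int].
apply: (@le_integrable _ _ _ (mu pi) (Uset T) _ _ _ _ _ HI).
- exact: measurableX.
- exact/measurable_EFinP.
- move=> z [z1 _] /=.
  rewrite lee_fin.
  apply: le_trans (@key_ineq _ _ _ _ _ _ M0 _) (ler_norm _).
  by apply: HM; move: z1; rewrite /= in_itv.
Qed.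





Lemma cont_int (R : realType) (d : measure_display) (V : measurableType d)
    (pi : {sigma_finite_measure set V -> \bar R}) (T : R) (h : R * V -> R) :
  0 <= T -> (mu pi).-integrable (Uset T) (EFin \o h) ->
  {within `[0, T], continuous (fun t => Rintegral (mu pi) (`[0, t] `*` setT) h)}.
Proof.
move=> T0 ih.
pose H := (EFin \o h) \_ (Uset T).
have iH : (mu pi).-integrable setT H.
  by apply/integrable_restrict => //; [exact: measurableX|rewrite setTI].
pose Fx := fubini_F pi H.
have iF : (@lebesgue_measure R).-integrable setT Fx := integrable_fubini_F iH.
have mF : measurable_fun setT Fx := measurable_fubini_F iH.
pose fr x := fine (Fx x).
have mfr : measurable_fun setT (EFin \o fr).
  apply/measurable_EFinP; apply: measurableT_comp => //; exact: fine_measurable.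
have ifr : (@lebesgue_measure R).-integrable `[0, T] (EFin \o fr).
  apply: (@le_integrable _ _ _ (@lebesgue_measure R) `[0, T]%classic _ (EFin \o fr) Fx) => //.
  - exact: measurable_funS mfr.
  - move=> x _; rewrite /fr /=; case: (Fx x) => [r||] /=; [exact: lexx|exact: leey|exact: leey].
  - exact: integrableS iF.
have key : forall t, t \in `[0, T] -> Rintegral (mu pi) (`[0, t] `*` setT) h =
    parameterized_integral lebesgue_measure 0 t fr.
  move=> t; rewrite in_itv /= => /andP[t0 tT].
  rewrite /parameterized_integral /Rintegral; congr fine.
  have DU : `[0, t]%classic `*` [set: V] `<=` Uset T.
    move=> [x y] [/= xt _]; split => //=; move: xt; rewrite /= !in_itv /=.
    by move=> /andP[-> xt]; rewrite (le_trans xt tT).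
  transitivity (\int[mu pi]_(z in `[0%R, t] `*` setT) H z)%E.
    apply: eq_integral => z zD; rewrite /H patchT //.
    by rewrite in_setE; apply: DU; rewrite -in_setE.
  rewrite [LHS]integral_mkcond.
  have iHt : (mu pi).-integrable setT (H \_ (`[0, t] `*` setT)).
    apply/integrable_restrict => //; first exact: measurableX.
    by rewrite setTI; apply: integrableS iH => //; exact: measurableX.
  rewrite -(integral12_prod_meas1 iHt).
  transitivity (\int[lebesgue_measure]_x (Fx \_ `[0%R, t]) x)%E.
    apply: eq_integral => x _; rewrite /fubini_F /patch.
    case: ifPn => xt.
      apply: eq_integral => y _; rewrite ifT //.
      by rewrite in_setE; split => //; rewrite -in_setE.
    apply: integral0_eq => y _; rewrite ifF //.
    apply/negbTE; apply: contra xt; rewrite !in_setE => -[] //.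
  rewrite -integral_mkcond.
  apply: ae_eq_integral => //.
  - by apply: measurable_funS mF.
  - by apply: measurable_funS mfr.
  - apply: filterS (integrable_ae measurableT iF) => x /(_ I) xfin _.
    by rewrite /= fineK.
have := parameterized_integral_continuous T0 ifr.
apply: subspace_eq_continuous => t tT.
rewrite /from_subspace key //; by move: tT; rewrite in_setE.
Qed.

Lemma cont_sum_seq (R : realType) (A : set R) (F : nat -> R -> R) (r : seq nat) :
  (forall k, k \in r -> {within A, continuous (F k)}) ->
  {within A, continuous (fun t => \sum_(k <- r) F k t)}.
Proof.
elim: r => [_|k r IH Hr].
  under eq_fun do rewrite big_nil. exact: cst_continuous.
under eq_fun do rewrite big_cons.
move=> x; apply: (continuousD (Hr k _ x) (IH _ x)).
  by rewrite inE eqxx.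
by move=> j jr; apply: Hr; rewrite inE jr orbT.
Qed.

Lemma cont_add_cst (R : realType) (A : set R) (c : R) (g : R -> R) :
  {within A, continuous g} -> {within A, continuous (fun t => c + g t)}.
Proof.
move=> Hg x.
have Hc : {for x, continuous (from_subspace A (fun=> c))} by exact: cst_continuous.
exact: (continuousD Hc (Hg x)).
Qed.

Lemma cont_fsum (R : realType) (A : set R) (K : set nat) (F : nat -> R -> R) :
  finite_set K -> (forall k, K k -> {within A, continuous (F k)}) ->
  {within A, continuous (fun t => \sum_(k \in K) F k t)}.
Proof.
move=> fK HF.
have E : (fun t => \sum_(k \in K) F k t) = (fun t => \sum_(k <- (fset_set K : seq nat)) F k t).
  apply/funext => t; apply: fsbig_fwiden => //.
  - by move=> x Kx /=; rewrite in_fset_set // in_setE.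
  - by move=> x [/=]; rewrite in_fset_set // in_setE.
rewrite E; apply: cont_sum_seq => k; rewrite in_fset_set // in_setE; exact: HF.
Qed.

Lemma cont_term (R : realType) (d : measure_display) (V : measurableType d)
    (pi : {sigma_finite_measure set V -> \bar R}) (T : R)
    (G g mk : R * V -> R) (v : R -> R) :
  L2 pi T G -> L2 pi T g -> L2 pi T mk -> {within `[0, T], continuous v} ->
  {within `[0, T], continuous (fun t => Rintegral (mu pi) (`[0, t] `*` setT)
     (fun z => (v z.1 * G z + g z) * mk z))}.
Proof.
move=> LG Lg Lm Hv.
have [T0|T0] := leP 0 T.
  by apply: cont_int => //; exact: integrable_term.
rewrite set_itv_ge; first exact: continuous_subspace0.
by rewrite bnd_simp -ltNge.
Qed.

Definition Phi (R : realType) (d : measure_display) (V : measurableType d)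
    (pi : {sigma_finite_measure set V -> \bar R})
    (m : nat -> R * V -> R) (G : R * V -> R) (w : multi_index -> R)
    (f : multi_index -> R * V -> R) (v : multi_index -> R -> R) : multi_index -> R -> R :=
  fun a t => w a + diamond_int pi m (lin_field v G f) t a.
Arguments Phi {R d V}.

Definition Uit (R : realType) (d : measure_display) (V : measurableType d)
    (pi : {sigma_finite_measure set V -> \bar R})
    (m : nat -> R * V -> R) (G : R * V -> R) (w : multi_index -> R)
    (f : multi_index -> R * V -> R) (n : nat) : multi_index -> R -> R :=
  iter n (Phi pi m G w f) (fun a _ => w a).
Arguments Uit {R d V}.

Lemma Uit_stab (R : realType) (d : measure_display) (V : measurableType d)
    (pi : {sigma_finite_measure set V -> \bar R})
    (m : nat -> R * V -> R) (G : R * V -> R) (w : multi_index -> R)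
    (f : multi_index -> R * V -> R) n :
  forall b, fin_supp b -> (mi_norm b < n)%N ->
    Uit pi m G w f n b = Uit pi m G w f n.+1 b.
Proof.
elim: n => [//|n IH] b fb bn.
rewrite /Uit !iterS -/(Uit pi m G w f n) -/(Uit pi m G w f n.+1).
apply/funext => t; rewrite /Phi; congr (_ + _).
rewrite /diamond_int; apply: eq_fsbigr => k; rewrite in_setE /= => bk.
congr Rintegral; apply/funext => z; rewrite /lin_field.
rewrite IH //; first exact: fin_supp_sub.
by move: bn; rewrite (mi_norm_sub fb bk).
Qed.

Lemma Uit_stab2 (R : realType) (d : measure_display) (V : measurableType d)
    (pi : {sigma_finite_measure set V -> \bar R})
    (m : nat -> R * V -> R) (G : R * V -> R) (w : multi_index -> R)
    (f : multi_index -> R * V -> R) n :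
  forall b, fin_supp b -> (mi_norm b < n)%N ->
    Uit pi m G w f n b = Uit pi m G w f (mi_norm b).+1 b.
Proof.
elim: n => [//|n IH] b fb bn.
move: bn; rewrite ltnS leq_eqVlt => /orP[/eqP <-//|bn].
by rewrite -Uit_stab // IH.
Qed.

Lemma Uit_cont (R : realType) (d : measure_display) (V : measurableType d)
    (pi : {sigma_finite_measure set V -> \bar R}) (T : R)
    (m : nat -> R * V -> R) (G : R * V -> R) (w : multi_index -> R)
    (f : multi_index -> R * V -> R) n :
  complete_orthonormal pi T m -> L2 pi T G ->
  (forall a, fin_supp a -> L2 pi T (f a)) ->
  forall b, fin_supp b -> {within `[0, T], continuous (Uit pi m G w f n b)}.
Proof.
move=> [Hm _ _] HG Hf.
elim: n => [|n IH] b fb.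
  exact: cst_continuous.
rewrite /Uit iterS -/(Uit pi m G w f n) /Phi.
apply: cont_add_cst.
apply: cont_fsum.
  apply: sub_finite_set fb => k /=; rewrite lt0n //.
move=> k _; apply: cont_term => //; [exact/Hf/fin_supp_sub | exact/IH/fin_supp_sub].
Qed.

Theorem lemma2 (R : realType) (d : measure_display) (V : measurableType d)
    (pi : {sigma_finite_measure set V -> \bar R}) (T : R)
    (m : nat -> R * V -> R)
    (G : R * V -> R) (w : multi_index -> R) (f : multi_index -> R * V -> R) :
  complete_orthonormal pi T m ->
  L2 pi T G ->
  (forall a, fin_supp a -> L2 pi T (f a)) ->
  exists u : multi_index -> R -> R,
    [/\ continuous_coeffs T u,
        is_solution pi T m w G f u,
        (forall v : multi_index -> R -> R,
           continuous_coeffs T v -> is_solution pi T m w G f v ->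
           forall a, fin_supp a -> forall t, 0 <= t <= T -> v a t = u a t),
        (forall t, 0 <= t <= T -> u mi_zero t = w mi_zero) &
        (forall a, fin_supp a -> (1 <= mi_norm a)%N ->
           forall t, 0 <= t <= T ->
           u a t = w a + \sum_(k \in [set k | (0 < a k)%N])
             Rintegral (mu pi) (`[0, t] `*` setT)
               (fun z => (u (mi_sub a (eps k)) z.1 * G z
                          + f (mi_sub a (eps k)) z) * m k z))].
Proof.
move=> Hm HG Hf.
pose u : multi_index -> R -> R := fun a => Uit pi m G w f (mi_norm a).+1 a.
have sol : is_solution pi T m w G f u.
  move=> t _ a fa; rewrite /u /Uit iterS -/(Uit pi m G w f (mi_norm a)) /Phi.
  congr (_ + _); rewrite /diamond_int; apply: eq_fsbigr => k; rewrite in_setE /= => ak.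
  congr Rintegral; apply/funext => z; rewrite /lin_field.
  rewrite Uit_stab2 //; first exact: fin_supp_sub.
  by rewrite (mi_norm_sub fa ak).
exists u; split => //.
- by move=> a fa; exact: Uit_cont.
- move=> v _ solv.
  suff H : forall n a, fin_supp a -> (mi_norm a < n)%N ->
      forall t, 0 <= t <= T -> v a t = u a t.
    by move=> a fa; apply: (H (mi_norm a).+1).
  elim=> [//|n IH] a fa an t tT.
  rewrite (solv t tT a fa) (sol t tT a fa); congr (_ + _).
  rewrite /diamond_int; apply: eq_fsbigr => k; rewrite in_setE /= => ak.
  apply: eq_Rintegral => z; rewrite in_setE => -[/= z1 _]; rewrite /lin_field.
  rewrite IH //; first exact: fin_supp_sub.
    by move: an; rewrite (mi_norm_sub fa ak).
  move: z1 tT; rewrite in_itv /= => /andP[z0 zt] /andP[_ tT].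
  by rewrite z0 (le_trans zt tT).
- move=> t tT; rewrite (sol t tT mi_zero fin_supp0) /diamond_int fsbig1 ?addr0 //.
- by move=> a fa _ t tT; rewrite (sol t tT a fa).
Qed.
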